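(* Let $\mathbf{h}_1,\mathbf{h}_2\in\mathbb{C}^M$ be linearly independent, $P,\sigma^2>0$, $\rho=\|\mathbf{h}_1\|^2/\|\mathbf{h}_2\|^2$, and $\varphi\in(0,\pi/2]$ the Hermitian angle defined by $\cos\varphi=\frac{|\mathbf{h}_1^H\mathbf{h}_2|}{\|\mathbf{h}_1\|\|\mathbf{h}_2\|}$. Let $\nu(\rho,\varphi)=10\log_{10}\frac{\mathrm{SNR}_{\rm md}}{\mathrm{SNR}_{\rm zf}}$. Then: (1) if $0<\rho\le1$ and $0\le\cos\varphi\le\sqrt\rho$: $\nu=10\log_{10}\frac{1+\rho}{1+\rho-2\sqrt\rho\cos\varphi}$; (2) if $0<\rho\le1$ and $\sqrt\rho<\cos\varphi<1$: $\nu=10\log_{10}\frac{1+\rho}{1-\cos^2\varphi}$; (3) if $\rho>1$ and $0\le\cos\varphi\le1/\sqrt\rho$: $\nu=10\log_{10}\frac{1+\rho}{1+\rho-2\sqrt\rho\cos\varphi}$; (4) if $\rho>1$ and $1/\sqrt\rho<\cos\varphi<1$: $\nu=10\log_{10}\frac{1+1/\rho}{1-\cos^2\varphi}$.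
   Context: With $\mathbf{H}=[\mathbf{h}_1\ \mathbf{h}_2]$ and $\mu_1,\mu_2$ the eigenvalues of $\mathbf{H}^H\mathbf{H}$: $\mathrm{SNR}_{\rm zf}=\frac{P}{\sigma^2\sum_{i=1}^2[(\mathbf{H}^H\mathbf{H})^{-1}]_{i,i}}=\frac{P\mu_1\mu_2}{\sigma^2(\mu_1+\mu_2)}$, and $\mathrm{SNR}_{\rm md}=\frac{1}{\sigma^2}\max_{\mathbf{w}\in\mathbb{C}^M,\ \|\mathbf{w}\|^2=P}\min\{|\mathbf{h}_1^H\mathbf{w}|^2,|\mathbf{h}_2^H\mathbf{w}|^2\}$. *)

(* Defs.v *)
From Stdlib Require Import Reals List.
Import ListNotations.
Open Scope R_scope.

(* Complex numbers z = (Re z, Im z). *)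
Definition Cplx : Type := (R * R)%type.
Definition C0 : Cplx := (0, 0).
Definition Cadd (z w : Cplx) : Cplx := (fst z + fst w, snd z + snd w).
Definition Cmul (z w : Cplx) : Cplx :=
  (fst z * fst w - snd z * snd w, fst z * snd w + snd z * fst w).
Definition Cconj (z : Cplx) : Cplx := (fst z, - snd z).
Definition Cnorm2 (z : Cplx) : R := fst z * fst z + snd z * snd z.
Definition Cabs (z : Cplx) : R := sqrt (Cnorm2 z).

(* Vectors in Cplx^M are functions nat -> Cplx; only indices 0..M-1 matter. *)
Definition vsum (M : nat) (f : nat -> R) : R :=
  fold_right Rplus 0 (map f (seq 0 M)).

Definition inner (M : nat) (u v : nat -> Cplx) : Cplx :=
  (vsum M (fun i => fst (Cmul (Cconj (u i)) (v i))),
   vsum M (fun i => snd (Cmul (Cconj (u i)) (v i)))).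

Definition vnorm2 (M : nat) (u : nat -> Cplx) : R := vsum M (fun i => Cnorm2 (u i)).

Definition lin_indep2 (M : nat) (h1 h2 : nat -> Cplx) : Prop :=
  forall a b : Cplx,
    (forall i, (i < M)%nat -> Cadd (Cmul a (h1 i)) (Cmul b (h2 i)) = C0) ->
    a = C0 /\ b = C0.

(* Gram matrix G = H^H H = [[g11, g12],[conj g12, g22]],
   g11 = ||h1||^2, g22 = ||h2||^2, g12 = h1^H h2; det G = g11 g22 - |g12|^2.
   Diagonal of G^{-1}: [G^{-1}]_{11} = g22 / det G, [G^{-1}]_{22} = g11 / det G. *)
Definition gram_det (M : nat) (h1 h2 : nat -> Cplx) : R :=
  vnorm2 M h1 * vnorm2 M h2 - Cnorm2 (inner M h1 h2).

(* SNR_zf = P / (sigma^2 * sum_i [(H^H H)^{-1}]_{ii}) *)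
Definition SNR_zf (M : nat) (P s2 : R) (h1 h2 : nat -> Cplx) : R :=
  P / (s2 * (vnorm2 M h2 / gram_det M h1 h2 + vnorm2 M h1 / gram_det M h1 h2)).

Definition md_obj (M : nat) (s2 : R) (h1 h2 w : nat -> Cplx) : R :=
  / s2 * Rmin (Cnorm2 (inner M h1 w)) (Cnorm2 (inner M h2 w)).

Definition is_SNR_md (M : nat) (P s2 : R) (h1 h2 : nat -> Cplx) (v : R) : Prop :=
  (exists w : nat -> Cplx, vnorm2 M w = P /\ md_obj M s2 h1 h2 w = v) /\
  (forall w : nat -> Cplx, vnorm2 M w = P -> md_obj M s2 h1 h2 w <= v).

Definition log10 (x : R) : R := ln x / ln 10.

Definition rho_of (M : nat) (h1 h2 : nat -> Cplx) : R := vnorm2 M h1 / vnorm2 M h2.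

Definition cos_herm (M : nat) (h1 h2 : nat -> Cplx) : R :=
  Cabs (inner M h1 h2) / (sqrt (vnorm2 M h1) * sqrt (vnorm2 M h2)).

(* Main.v *)
Require Import Defs.
From Stdlib Require Import Reals Lra Psatz List.
Open Scope R_scope.

Lemma fr_add (l : list nat) (F f g : nat -> R) :
  (forall i, In i l -> F i = f i + g i) ->
  fold_right Rplus 0 (map F l) = fold_right Rplus 0 (map f l) + fold_right Rplus 0 (map g l).
Proof.
  induction l as [|x l IH]; intros H; simpl. lra.
  rewrite (H x (or_introl eq_refl)), IH. lra. intros i Hi; apply H; right; exact Hi.
Qed.

Lemma fr_scal (l : list nat) (F f : nat -> R) c :
  (forall i, In i l -> F i = c * f i) ->
  fold_right Rplus 0 (map F l) = c * fold_right Rplus 0 (map f l).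
Proof.
  induction l as [|x l IH]; intros H; simpl. lra.
  rewrite (H x (or_introl eq_refl)), IH. lra. intros i Hi; apply H; right; exact Hi.
Qed.

Lemma fr_nonneg (l : list nat) (f : nat -> R) :
  (forall i, In i l -> 0 <= f i) -> 0 <= fold_right Rplus 0 (map f l).
Proof.
  induction l as [|x l IH]; intros H; simpl. lra.
  pose proof (H x (or_introl eq_refl)). assert (0 <= fold_right Rplus 0 (map f l)).
  apply IH; intros i Hi; apply H; right; exact Hi. lra.
Qed.

Lemma fr_zero (l : list nat) (f : nat -> R) :
  (forall i, In i l -> 0 <= f i) -> fold_right Rplus 0 (map f l) = 0 ->
  forall i, In i l -> f i = 0.
Proof.
  induction l as [|x l IH]; intros H H0 i Hi; simpl in *. contradiction.
  pose proof (H x (or_introl eq_refl)).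
  assert (0 <= fold_right Rplus 0 (map f l)).
  apply fr_nonneg; intros j Hj; apply H; right; exact Hj.
  destruct Hi as [<-|Hi]. lra.
  apply IH; [intros j Hj; apply H; right; exact Hj | lra | exact Hi].
Qed.

Lemma vsum_add M (F f g : nat -> R) :
  (forall i, (i < M)%nat -> F i = f i + g i) -> vsum M F = vsum M f + vsum M g.
Proof. intros H; unfold vsum; apply fr_add; intros i Hi; apply in_seq in Hi; apply H; lia. Qed.

Lemma vsum_scal M (F f : nat -> R) c :
  (forall i, (i < M)%nat -> F i = c * f i) -> vsum M F = c * vsum M f.
Proof. intros H; unfold vsum; apply fr_scal; intros i Hi; apply in_seq in Hi; apply H; lia. Qed.

Lemma vsum_nonneg M (f : nat -> R) :
  (forall i, (i < M)%nat -> 0 <= f i) -> 0 <= vsum M f.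
Proof. intros H; unfold vsum; apply fr_nonneg; intros i Hi; apply in_seq in Hi; apply H; lia. Qed.

Lemma vsum_zero M (f : nat -> R) :
  (forall i, (i < M)%nat -> 0 <= f i) -> vsum M f = 0 -> forall i, (i < M)%nat -> f i = 0.
Proof.
  intros H H0 i Hi; unfold vsum in H0. apply (fr_zero (seq 0 M) f).
  - intros j Hj; apply in_seq in Hj; apply H; lia.
  - exact H0.
  - apply in_seq; lia.
Qed.

Lemma vsum_comb4 M (F f1 f2 f3 f4 : nat -> R) c1 c2 c3 c4 :
  (forall i, (i < M)%nat -> F i = c1 * f1 i + c2 * f2 i + c3 * f3 i + c4 * f4 i) ->
  vsum M F = c1 * vsum M f1 + c2 * vsum M f2 + c3 * vsum M f3 + c4 * vsum M f4.
Proof.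
  intros H.
  rewrite (vsum_add M F (fun i => c1 * f1 i + c2 * f2 i + c3 * f3 i) (fun i => c4 * f4 i)) by auto.
  rewrite (vsum_add M _ (fun i => c1 * f1 i + c2 * f2 i) (fun i => c3 * f3 i)) by reflexivity.
  rewrite (vsum_add M _ (fun i => c1 * f1 i) (fun i => c2 * f2 i)) by reflexivity.
  rewrite (vsum_scal M (fun i => c1 * f1 i) f1 c1) by reflexivity.
  rewrite (vsum_scal M (fun i => c2 * f2 i) f2 c2) by reflexivity.
  rewrite (vsum_scal M (fun i => c3 * f3 i) f3 c3) by reflexivity.
  rewrite (vsum_scal M (fun i => c4 * f4 i) f4 c4) by reflexivity.
  reflexivity.
Qed.

Lemma Cnorm2_nonneg z : 0 <= Cnorm2 z.
Proof. destruct z; unfold Cnorm2; simpl; nra. Qed.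

Lemma Cnorm2_mul z w : Cnorm2 (Cmul z w) = Cnorm2 z * Cnorm2 w.
Proof. destruct z, w; unfold Cnorm2, Cmul; simpl; ring. Qed.

Lemma Cnorm2_conj z : Cnorm2 (Cconj z) = Cnorm2 z.
Proof. destruct z; unfold Cnorm2, Cconj; simpl; ring. Qed.

Lemma Cnorm2_real r : Cnorm2 (r, 0) = r * r.
Proof. unfold Cnorm2; simpl; ring. Qed.

Lemma Cconj_conj z : Cconj (Cconj z) = z.
Proof. destruct z; unfold Cconj; simpl; f_equal; ring. Qed.

Lemma Cmul_assoc x y z : Cmul (Cmul x y) z = Cmul x (Cmul y z).
Proof. destruct x, y, z; unfold Cmul; simpl; f_equal; ring. Qed.

Lemma Cnorm2_zero z : Cnorm2 z = 0 -> z = C0.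
Proof. destruct z as [x y]; unfold Cnorm2, C0; simpl; intros H.
  assert (x = 0) by nra. assert (y = 0) by nra. subst; reflexivity. Qed.

Lemma Cabs_sq z : Cabs z * Cabs z = Cnorm2 z.
Proof. unfold Cabs; apply sqrt_sqrt, Cnorm2_nonneg. Qed.

Lemma Cabs_nonneg z : 0 <= Cabs z.
Proof. apply sqrt_pos. Qed.

Lemma fst_le_Cabs z : fst z <= Cabs z.
Proof.
  pose proof (Cabs_sq z); pose proof (Cabs_nonneg z). destruct z as [x y].
  unfold Cnorm2 in H; simpl in *. nra.
Qed.

Definition unit_of (z : Cplx) : Cplx :=
  if Req_EM_T (Cnorm2 z) 0 then (1, 0) else (fst z / Cabs z, - snd z / Cabs z).

Lemma unit_norm z : Cnorm2 (unit_of z) = 1.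
Proof.
  unfold unit_of; destruct (Req_EM_T (Cnorm2 z) 0) as [H|H].
  - unfold Cnorm2; simpl; ring.
  - pose proof (Cabs_sq z). assert (Cabs z <> 0) by (intro E; rewrite E in H0; lra).
    destruct z as [x y]. set (c := Cabs (x, y)) in *. unfold Cnorm2 in *; simpl in *.
    transitivity ((x*x+y*y)/(c*c)). field; auto. rewrite <- H0. field; auto.
Qed.

Lemma unit_mul z : Cmul (unit_of z) z = (Cabs z, 0).
Proof.
  unfold unit_of; destruct (Req_EM_T (Cnorm2 z) 0) as [H|H].
  - pose proof (Cnorm2_zero z H); subst. unfold Cabs; rewrite H.
    unfold Cmul, C0; simpl; rewrite sqrt_0; f_equal; ring.
  - pose proof (Cabs_sq z). assert (Cabs z <> 0) by (intro E; rewrite E in H0; lra).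
    destruct z as [x y]. set (c := Cabs (x, y)) in *. unfold Cnorm2 in *; unfold Cmul; simpl in *. f_equal.
    + transitivity ((x*x+y*y)/c). field; auto. rewrite <- H0. field; auto.
    + field. auto.
Qed.

Lemma unit_conj z : Cconj z = Cmul (Cabs z, 0) (unit_of z).
Proof.
  unfold unit_of; destruct (Req_EM_T (Cnorm2 z) 0) as [H|H].
  - pose proof (Cnorm2_zero z H); subst. unfold Cabs; rewrite H.
    unfold Cmul, C0, Cconj; simpl; rewrite sqrt_0; f_equal; ring.
  - pose proof (Cabs_sq z). assert (Cabs z <> 0) by (intro E; rewrite E in H0; lra).
    destruct z as [x y]; unfold Cmul, Cconj; simpl in *. f_equal; field; auto.
Qed.

Definition comb (p : Cplx) (x : nat -> Cplx) (q : Cplx) (y : nat -> Cplx) : nat -> Cplx :=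
  fun i => Cadd (Cmul p (x i)) (Cmul q (y i)).

Ltac pw3 h x y := let j := fresh "j" in intros j _; unfold comb;
  destruct (h j), (x j), (y j); unfold Cmul, Cconj, Cadd, Cnorm2; simpl; ring.

Lemma inner_comb M h p x q y :
  inner M h (comb p x q y) = Cadd (Cmul p (inner M h x)) (Cmul q (inner M h y)).
Proof.
  destruct p as [p1 p2], q as [q1 q2]. unfold inner at 1.
  rewrite (vsum_comb4 M (fun i => fst (Cmul (Cconj (h i)) (comb (p1,p2) x (q1,q2) y i)))
      (fun i => fst (Cmul (Cconj (h i)) (x i))) (fun i => snd (Cmul (Cconj (h i)) (x i)))
      (fun i => fst (Cmul (Cconj (h i)) (y i))) (fun i => snd (Cmul (Cconj (h i)) (y i))) p1 (-p2) q1 (-q2))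
    by pw3 h x y.
  rewrite (vsum_comb4 M (fun i => snd (Cmul (Cconj (h i)) (comb (p1,p2) x (q1,q2) y i)))
      (fun i => fst (Cmul (Cconj (h i)) (x i))) (fun i => snd (Cmul (Cconj (h i)) (x i)))
      (fun i => fst (Cmul (Cconj (h i)) (y i))) (fun i => snd (Cmul (Cconj (h i)) (y i))) p2 p1 q2 q1)
    by pw3 h x y.
  unfold inner, Cadd, Cmul at 3 4. simpl. f_equal; ring.
Qed.

Lemma inner_conj M x y : inner M y x = Cconj (inner M x y).
Proof.
  unfold inner at 1.
  rewrite (vsum_scal M (fun i => fst (Cmul (Cconj (y i)) (x i))) (fun i => fst (Cmul (Cconj (x i)) (y i))) 1)
    by (intros j _; destruct (x j), (y j); unfold Cmul, Cconj; simpl; ring).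
  rewrite (vsum_scal M (fun i => snd (Cmul (Cconj (y i)) (x i))) (fun i => snd (Cmul (Cconj (x i)) (y i))) (-1))
    by (intros j _; destruct (x j), (y j); unfold Cmul, Cconj; simpl; ring).
  unfold inner, Cconj; simpl; f_equal; ring.
Qed.

Lemma inner_self M x : inner M x x = (vnorm2 M x, 0).
Proof.
  unfold inner.
  rewrite (vsum_scal M (fun i => snd (Cmul (Cconj (x i)) (x i))) (fun i => 0) 0)
    by (intros j _; destruct (x j); unfold Cmul, Cconj; simpl; ring).
  f_equal; [|ring]. unfold vnorm2. rewrite <- (Rmult_1_l (vsum M (fun i => Cnorm2 (x i)))). apply vsum_scal.
  intros j _; destruct (x j); unfold Cmul, Cconj, Cnorm2; simpl; ring.
Qed.

Lemma vnorm2_nonneg M x : 0 <= vnorm2 M x.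
Proof. apply vsum_nonneg; intros; apply Cnorm2_nonneg. Qed.

Lemma norm_comb M p x q y :
  vnorm2 M (comb p x q y) =
  Cnorm2 p * vnorm2 M x + Cnorm2 q * vnorm2 M y + 2 * fst (Cmul (Cmul (Cconj p) q) (inner M x y)).
Proof.
  destruct p as [p1 p2], q as [q1 q2]. unfold vnorm2 at 1.
  rewrite (vsum_comb4 M (fun i => Cnorm2 (comb (p1,p2) x (q1,q2) y i))
      (fun i => Cnorm2 (x i)) (fun i => Cnorm2 (y i))
      (fun i => fst (Cmul (Cconj (x i)) (y i))) (fun i => snd (Cmul (Cconj (x i)) (y i)))
      (Cnorm2 (p1,p2)) (Cnorm2 (q1,q2)) (2 * fst (Cmul (Cconj (p1,p2)) (q1,q2)))
      (- 2 * snd (Cmul (Cconj (p1,p2)) (q1,q2))))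
    by pw3 x x y.
  unfold vnorm2, inner, Cmul at 3 4 5. simpl. ring.
Qed.

Lemma inner_comb_l M w p x q y :
  inner M (comb p x q y) w = Cadd (Cmul (Cconj p) (inner M x w)) (Cmul (Cconj q) (inner M y w)).
Proof.
  rewrite inner_conj, inner_comb, (inner_conj M x w), (inner_conj M y w).
  destruct p, q, (inner M w x), (inner M w y). unfold Cconj, Cadd, Cmul; simpl; f_equal; ring.
Qed.

Lemma CS M x w : Cnorm2 (inner M x w) <= vnorm2 M x * vnorm2 M w.
Proof.
  set (A := vnorm2 M x). set (W := vnorm2 M w). set (g := inner M x w).
  pose proof (norm_comb M (A, 0) w (- fst g, - snd g) x) as E.
  rewrite (inner_conj M x w) in E. fold g in E. fold A in E.
  replace (Cnorm2 (- fst g, - snd g)) with (Cnorm2 g) in E by (unfold Cnorm2; simpl; ring).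
  replace (fst (Cmul (Cmul (Cconj (A, 0)) (- fst g, - snd g)) (Cconj g))) with (- A * Cnorm2 g) in E
    by (destruct g; unfold Cmul, Cconj, Cnorm2; simpl; ring).
  rewrite Cnorm2_real in E. fold W in E.
  pose proof (vnorm2_nonneg M (comb (A, 0) w (- fst g, - snd g) x)).
  pose proof (vnorm2_nonneg M x). fold A in H0. pose proof (vnorm2_nonneg M w). fold W in H1.
  pose proof (Cnorm2_nonneg g).
  destruct (Req_EM_T A 0) as [HA|HA].
  - assert (forall i, (i < M)%nat -> x i = C0).
    { intros i Hi. apply Cnorm2_zero. apply (vsum_zero M (fun i => Cnorm2 (x i))); auto.
      intros; apply Cnorm2_nonneg. }
    assert (g = C0).
    { unfold g, inner. rewrite (vsum_scal M _ (fun _ => 0) 0), (vsum_scal M (fun i => snd _) (fun _ => 0) 0).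
      unfold C0; f_equal; ring.
      intros j Hj; rewrite H3 by auto; unfold Cmul, Cconj, C0; simpl; ring.
      intros j Hj; rewrite H3 by auto; unfold Cmul, Cconj, C0; simpl; ring. }
    rewrite H4. unfold Cnorm2, C0; simpl. nra.
  - assert (0 < A) by lra. nra.
Qed.

Lemma zero_vec M x : vnorm2 M x = 0 -> forall i, (i < M)%nat -> x i = C0.
Proof.
  intros H i Hi. apply Cnorm2_zero. apply (vsum_zero M (fun i => Cnorm2 (x i))); auto.
  intros; apply Cnorm2_nonneg.
Qed.

Lemma pos1 M h1 h2 : lin_indep2 M h1 h2 -> 0 < vnorm2 M h1.
Proof.
  intros Hl. destruct (Req_EM_T (vnorm2 M h1) 0) as [E|E].
  - exfalso. pose proof (zero_vec M h1 E).
    destruct (Hl (1,0) C0) as [H1 _].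
    { intros i Hi; rewrite H by auto. destruct (h2 i); unfold Cadd, Cmul, C0; simpl; f_equal; ring. }
    unfold C0 in H1; injection H1; lra.
  - pose proof (vnorm2_nonneg M h1); lra.
Qed.

Lemma pos2 M h1 h2 : lin_indep2 M h1 h2 -> 0 < vnorm2 M h2.
Proof.
  intros Hl. destruct (Req_EM_T (vnorm2 M h2) 0) as [E|E].
  - exfalso. pose proof (zero_vec M h2 E).
    destruct (Hl C0 (1,0)) as [_ H1].
    { intros i Hi; rewrite H by auto. destruct (h1 i); unfold Cadd, Cmul, C0; simpl; f_equal; ring. }
    unfold C0 in H1; injection H1; lra.
  - pose proof (vnorm2_nonneg M h2); lra.
Qed.

Lemma det_pos M h1 h2 : lin_indep2 M h1 h2 ->
  Cnorm2 (inner M h1 h2) < vnorm2 M h1 * vnorm2 M h2.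
Proof.
  intros Hl. pose proof (pos2 M h1 h2 Hl) as Hb.
  set (a := vnorm2 M h1) in *. set (b := vnorm2 M h2) in *. set (G := inner M h1 h2).
  set (q := (- fst (inner M h2 h1), - snd (inner M h2 h1))).
  pose proof (norm_comb M (b, 0) h1 q h2) as E.
  assert (Eq : Cnorm2 q = Cnorm2 G).
  { unfold q; rewrite (inner_conj M h1 h2); fold G; destruct G; unfold Cnorm2, Cconj; simpl; ring. }
  assert (Ef : fst (Cmul (Cmul (Cconj (b, 0)) q) (inner M h1 h2)) = - b * Cnorm2 G).
  { unfold q; rewrite (inner_conj M h1 h2); fold G; destruct G; unfold Cnorm2, Cconj, Cmul; simpl; ring. }
  rewrite Eq, Ef, Cnorm2_real in E. fold a b in E.
  pose proof (CS M h1 h2). fold a b G in H.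
  destruct (Req_EM_T (Cnorm2 G) (a * b)) as [D|D]; [|lra].
  exfalso.
  assert (vnorm2 M (comb (b, 0) h1 q h2) = 0) by (rewrite E, D; ring).
  pose proof (zero_vec M _ H0).
  destruct (Hl (b,0) q) as [H2 _]. exact H1.
  unfold C0 in H2; injection H2; lra.
Qed.

Lemma md_sym M P s2 x y v : is_SNR_md M P s2 x y v -> is_SNR_md M P s2 y x v.
Proof.
  unfold is_SNR_md, md_obj. intros [[w [H1 H2]] H3]. split.
  - exists w. rewrite Rmin_comm; auto.
  - intros w' Hw'. rewrite Rmin_comm; auto.
Qed.

Lemma Cabs_sym M x y : Cabs (inner M y x) = Cabs (inner M x y).
Proof. unfold Cabs; rewrite inner_conj, Cnorm2_conj; reflexivity. Qed.

Lemma L2 M P s2 x y v : 0 < P -> 0 < s2 -> 0 < vnorm2 M x ->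
  vnorm2 M x <= Cabs (inner M x y) -> is_SNR_md M P s2 x y v -> v = P * vnorm2 M x / s2.
Proof.
  intros HP Hs Ha Hg [[w0 [Hw0 Hm0]] Hub].
  set (a := vnorm2 M x) in *. set (G := inner M x y) in *.
  pose proof (Cabs_sq G) as Eg. pose proof (Cabs_nonneg G).
  set (k := sqrt (P / a)).
  assert (Ek : k * k = P / a) by (apply sqrt_sqrt; apply Rlt_le, Rdiv_lt_0_compat; auto).
  apply Rle_antisym.
  - rewrite <- Hm0. unfold md_obj.
    pose proof (CS M x w0). rewrite Hw0 in H0. fold a in H0.
    pose proof (Rmin_l (Cnorm2 (inner M x w0)) (Cnorm2 (inner M y w0))).
    replace (P * a / s2) with (/ s2 * (a * P)) by (field; lra).
    apply Rmult_le_compat_l. left; apply Rinv_0_lt_compat; auto. lra.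
  - set (w := comb (k, 0) x C0 y).
    assert (Hw : vnorm2 M w = P).
    { unfold w; rewrite norm_comb, Cnorm2_real. fold a.
      replace (fst (Cmul (Cmul (Cconj (k, 0)) C0) (inner M x y))) with 0
        by (destruct (inner M x y); unfold Cmul, Cconj, C0; simpl; ring).
      unfold Cnorm2, C0; simpl. rewrite Ek. field. lra. }
    assert (H1 : Cnorm2 (inner M x w) = P * a).
    { unfold w; rewrite inner_comb, inner_self. fold a.
      replace (Cadd (Cmul (k, 0) (a, 0)) (Cmul C0 (inner M x y))) with (k * a, 0)
        by (destruct (inner M x y); unfold Cmul, Cadd, C0; simpl; f_equal; ring).
      rewrite Cnorm2_real.
      replace (k * a * (k * a)) with (k * k * a * a) by ring. rewrite Ek. field. lra. }
    assert (H2 : P * a <= Cnorm2 (inner M y w)).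
    { unfold w; rewrite inner_comb, inner_self, (inner_conj M x y). fold G.
      replace (Cadd (Cmul (k, 0) (Cconj G)) (Cmul C0 (vnorm2 M y, 0))) with (Cmul (k, 0) (Cconj G))
        by (destruct G; unfold Cmul, Cadd, C0, Cconj; simpl; f_equal; ring).
      rewrite Cnorm2_mul, Cnorm2_real, Cnorm2_conj, Ek. rewrite <- Eg.
      replace (P / a * (Cabs G * Cabs G)) with (P * (Cabs G * Cabs G) / a) by (field; lra).
      apply Rmult_le_reg_r with a; auto. replace (P * (Cabs G * Cabs G) / a * a) with (P * (Cabs G * Cabs G)) by (field; lra).
      assert (a * a <= Cabs G * Cabs G) by nra.
      replace (P * a * a) with (P * (a * a)) by ring. apply Rmult_le_compat_l; lra. }
    pose proof (Hub w Hw) as H3. unfold md_obj in H3.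
    rewrite Rmin_left in H3 by lra. rewrite H1 in H3.
    replace (P * a / s2) with (/ s2 * (P * a)) by (field; lra). exact H3.
Qed.

Lemma L1 M P s2 x y v : 0 < P -> 0 < s2 -> 0 < vnorm2 M x -> 0 < vnorm2 M y ->
  Cnorm2 (inner M x y) < vnorm2 M x * vnorm2 M y ->
  Cabs (inner M x y) <= vnorm2 M x -> Cabs (inner M x y) <= vnorm2 M y ->
  is_SNR_md M P s2 x y v ->
  v = P * ((vnorm2 M x * vnorm2 M y - Cabs (inner M x y) * Cabs (inner M x y)) /
           (vnorm2 M x + vnorm2 M y - 2 * Cabs (inner M x y))) / s2.
Proof.
  intros HP Hs Ha Hb Hdet Hga Hgb [[w0 [Hw0 Hm0]] Hub].
  set (a := vnorm2 M x) in *. set (b := vnorm2 M y) in *. set (G := inner M x y) in *.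
  set (g := Cabs G) in *.
  pose proof (Cabs_sq G) as Eg. fold g in Eg. pose proof (Cabs_nonneg G) as Hg0. fold g in Hg0.
  rewrite <- Eg in Hdet.
  assert (HD : 0 < a + b - 2 * g) by nra.
  set (D := a + b - 2 * g) in *.
  set (t := (b - g) / D).
  set (f := (a * b - g * g) / D).
  assert (Hf : 0 < f) by (unfold f; apply Rdiv_lt_0_compat; lra).
  assert (Ht0 : 0 <= t) by (unfold t; apply Rmult_le_pos; [lra | left; apply Rinv_0_lt_compat; lra]).
  assert (Ht1 : t <= 1).
  { unfold t; replace ((b - g) / D) with (1 - (a - g) / D) by (unfold D in *; field; lra).
    assert (0 <= (a - g) / D) by (apply Rmult_le_pos; [lra | left; apply Rinv_0_lt_compat; lra]). lra. }
  assert (E1 : t * a + (1 - t) * g = f) by (unfold t, f, D in *; field; lra).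
  assert (E2 : t * g + (1 - t) * b = f) by (unfold t, f, D in *; field; lra).
  assert (E3 : t * t * a + (1 - t) * (1 - t) * b + 2 * (t * (1 - t) * g) = f)
    by (unfold t, f, D in *; field; lra).
  apply Rle_antisym.
  -
    rewrite <- Hm0. unfold md_obj.
    replace (P * f / s2) with (/ s2 * (f * P)) by (field; lra).
    apply Rmult_le_compat_l. left; apply Rinv_0_lt_compat; auto.
    set (u := inner M x w0). set (v' := inner M y w0).
    set (p := Cconj (Cmul (t, 0) (unit_of u))). set (q := Cconj (Cmul (1 - t, 0) (unit_of v'))).
    assert (Hz : inner M (comb p x q y) w0 = (t * Cabs u + (1 - t) * Cabs v', 0)).
    { rewrite inner_comb_l. unfold p, q. rewrite !Cconj_conj, !Cmul_assoc. fold u v'.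
      rewrite !unit_mul. unfold Cmul, Cadd; simpl; f_equal; ring. }
    pose proof (CS M (comb p x q y) w0) as Hcs. rewrite Hz, Cnorm2_real, Hw0 in Hcs.
    assert (Hn : vnorm2 M (comb p x q y) <= f).
    { rewrite norm_comb. fold a b G.
      assert (Cnorm2 p = t * t) by (unfold p; rewrite Cnorm2_conj, Cnorm2_mul, Cnorm2_real, unit_norm; ring).
      assert (Cnorm2 q = (1 - t) * (1 - t))
        by (unfold q; rewrite Cnorm2_conj, Cnorm2_mul, Cnorm2_real, unit_norm; ring).
      pose proof (fst_le_Cabs (Cmul (Cmul (Cconj p) q) G)).
      assert (Cabs (Cmul (Cmul (Cconj p) q) G) = t * (1 - t) * g).
      { unfold Cabs. rewrite !Cnorm2_mul, Cnorm2_conj, H, H0, <- Eg.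
        replace (t * t * ((1 - t) * (1 - t)) * (g * g)) with ((t * (1 - t) * g) * (t * (1 - t) * g)) by ring.
        apply sqrt_square. apply Rmult_le_pos; [apply Rmult_le_pos|]; lra. }
      rewrite H, H0. rewrite <- E3. nra. }
    assert (Hsq : (t * Cabs u + (1 - t) * Cabs v') * (t * Cabs u + (1 - t) * Cabs v') <= f * P).
    { eapply Rle_trans; [exact Hcs|]. apply Rmult_le_compat_r; lra. }
    pose proof (Cabs_sq u). pose proof (Cabs_sq v'). pose proof (Cabs_nonneg u). pose proof (Cabs_nonneg v').
    eapply Rle_trans; [|exact Hsq].
    unfold Rmin; destruct (Rle_dec (Cnorm2 u) (Cnorm2 v')) as [Hc|Hc].
    + assert (Cabs u <= Cabs v') by (unfold Cabs; apply sqrt_le_1_alt; auto).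
      rewrite <- H. assert (Cabs u <= t * Cabs u + (1 - t) * Cabs v') by nra.
      apply Rmult_le_compat; lra.
    + assert (Cabs v' <= Cabs u) by (unfold Cabs; apply sqrt_le_1_alt; lra).
      rewrite <- H0. assert (Cabs v' <= t * Cabs u + (1 - t) * Cabs v') by nra.
      apply Rmult_le_compat; lra.
  -
    set (z := unit_of G). set (k := sqrt (P / f)).
    assert (Ek : k * k = P / f) by (apply sqrt_sqrt; apply Rlt_le, Rdiv_lt_0_compat; auto).
    assert (Ez : Cmul z G = (g, 0)) by (apply unit_mul).
    assert (Ezc : Cconj G = Cmul (g, 0) z) by (apply unit_conj).
    assert (Nz : Cnorm2 z = 1) by (apply unit_norm).
    set (w := comb (k * t, 0) x (Cmul (k * (1 - t), 0) z) y).
    assert (Hw : vnorm2 M w = P).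
    { unfold w; rewrite norm_comb. fold a b G.
      rewrite Cnorm2_mul, !Cnorm2_real, Nz.
      replace (Cmul (Cmul (Cconj (k * t, 0)) (Cmul (k * (1 - t), 0) z)) G)
        with (Cmul (Cmul (Cconj (k * t, 0)) (k * (1 - t), 0)) (Cmul z G))
        by (rewrite !Cmul_assoc; reflexivity).
      rewrite Ez. unfold Cmul, Cconj; simpl.
      transitivity (k * k * (t * t * a + (1 - t) * (1 - t) * b + 2 * (t * (1 - t) * g))); [ring|].
      rewrite E3, Ek. field. lra. }
    assert (H1 : Cnorm2 (inner M x w) = P * f).
    { unfold w; rewrite inner_comb, inner_self. fold a G.
      rewrite Cmul_assoc, Ez.
      replace (Cadd (Cmul (k * t, 0) (a, 0)) (Cmul (k * (1 - t), 0) (g, 0))) with (k * (t * a + (1 - t) * g), 0)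
        by (unfold Cmul, Cadd; simpl; f_equal; ring).
      rewrite Cnorm2_real, E1.
      replace (k * f * (k * f)) with (k * k * f * f) by ring. rewrite Ek. field. lra. }
    assert (H2 : Cnorm2 (inner M y w) = P * f).
    { unfold w; rewrite inner_comb, inner_self, (inner_conj M x y). fold b G. rewrite Ezc.
      replace (Cadd (Cmul (k * t, 0) (Cmul (g, 0) z)) (Cmul (Cmul (k * (1 - t), 0) z) (b, 0)))
        with (Cmul (k * (t * g + (1 - t) * b), 0) z)
        by (destruct z; unfold Cmul, Cadd; simpl; f_equal; ring).
      rewrite Cnorm2_mul, Cnorm2_real, Nz, E2.
      replace (k * f * (k * f) * 1) with (k * k * f * f) by ring. rewrite Ek. field. lra. }
    pose proof (Hub w Hw) as H3. unfold md_obj in H3.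
    rewrite H1, H2, Rmin_left in H3 by lra.
    replace (P * f / s2) with (/ s2 * (P * f)) by (field; lra). exact H3.
Qed.

Lemma conv_le g sa sb r : 0 < sa -> 0 < sb -> g / (sa * sb) <= r / sb -> g <= r * sa.
Proof.
  intros H1 H2 H. apply Rmult_le_compat_r with (r := sa * sb) in H; [|nra].
  replace (g / (sa * sb) * (sa * sb)) with g in H by (field; lra).
  replace (r / sb * (sa * sb)) with (r * sa) in H by (field; lra). exact H.
Qed.

Lemma conv_lt g sa sb r : 0 < sa -> 0 < sb -> r / sb < g / (sa * sb) -> r * sa < g.
Proof.
  intros H1 H2 H. apply Rmult_lt_compat_r with (r := sa * sb) in H; [|nra].
  replace (g / (sa * sb) * (sa * sb)) with g in H by (field; lra).
  replace (r / sb * (sa * sb)) with (r * sa) in H by (field; lra). exact H.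
Qed.

Theorem corollary3 (M : nat) (h1 h2 : nat -> Cplx) (P s2 : R) :
  lin_indep2 M h1 h2 -> 0 < P -> 0 < s2 ->
  forall snr_md : R, is_SNR_md M P s2 h1 h2 snr_md ->
  let rho := rho_of M h1 h2 in
  let c := cos_herm M h1 h2 in
  let nu := 10 * log10 (snr_md / SNR_zf M P s2 h1 h2) in
  (0 < rho <= 1 -> 0 <= c <= sqrt rho ->
     nu = 10 * log10 ((1 + rho) / (1 + rho - 2 * sqrt rho * c))) /\
  (0 < rho <= 1 -> sqrt rho < c < 1 ->
     nu = 10 * log10 ((1 + rho) / (1 - c ^ 2))) /\
  (rho > 1 -> 0 <= c <= 1 / sqrt rho ->
     nu = 10 * log10 ((1 + rho) / (1 + rho - 2 * sqrt rho * c))) /\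
  (rho > 1 -> 1 / sqrt rho < c < 1 ->
     nu = 10 * log10 ((1 + 1 / rho) / (1 - c ^ 2))).
Proof.
  intros Hl HP Hs snr Hsnr. cbv zeta.
  pose proof (pos1 M h1 h2 Hl) as Ha. pose proof (pos2 M h1 h2 Hl) as Hb.
  pose proof (det_pos M h1 h2 Hl) as Hd.
  pose proof (Cabs_sq (inner M h1 h2)) as Eg. pose proof (Cabs_nonneg (inner M h1 h2)) as Hg0.
  pose proof (L1 M P s2 h1 h2 snr HP Hs Ha Hb Hd) as HL1.
  pose proof (L2 M P s2 h1 h2 snr HP Hs Ha) as HL2a.
  pose proof (L2 M P s2 h2 h1 snr HP Hs Hb) as HL2b. rewrite Cabs_sym in HL2b.
  pose proof (md_sym _ _ _ _ _ _ Hsnr) as Hsnr'.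
  change (rho_of M h1 h2) with (vnorm2 M h1 / vnorm2 M h2).
  change (cos_herm M h1 h2) with (Cabs (inner M h1 h2) / (sqrt (vnorm2 M h1) * sqrt (vnorm2 M h2))).
  change (SNR_zf M P s2 h1 h2) with
    (P / (s2 * (vnorm2 M h2 / (vnorm2 M h1 * vnorm2 M h2 - Cnorm2 (inner M h1 h2)) +
                vnorm2 M h1 / (vnorm2 M h1 * vnorm2 M h2 - Cnorm2 (inner M h1 h2))))).
  rewrite sqrt_div_alt by exact Hb.
  rewrite <- Eg in *.
  assert (Esa := sqrt_sqrt (vnorm2 M h1) (Rlt_le _ _ Ha)).
  assert (Esb := sqrt_sqrt (vnorm2 M h2) (Rlt_le _ _ Hb)).
  assert (Hsa := sqrt_lt_R0 _ Ha). assert (Hsb := sqrt_lt_R0 _ Hb).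
  set (sa := sqrt (vnorm2 M h1)) in *. set (sb := sqrt (vnorm2 M h2)) in *.
  set (g := Cabs (inner M h1 h2)) in *.
  set (a := vnorm2 M h1) in *. set (b := vnorm2 M h2) in *.
  clearbody sa sb g a b.
  subst a b.
  split; [|split; [|split]].
  - intros [Hr0 Hr1] [Hc0 Hc1].
    assert (Hab : sa * sa <= sb * sb).
    { apply Rmult_le_compat_r with (r := sb * sb) in Hr1; [|nra].
      replace (sa * sa / (sb * sb) * (sb * sb)) with (sa * sa) in Hr1 by (field; lra). lra. }
    assert (Hga : g <= sa * sa) by (apply (conv_le g sa sb sa); auto).
    rewrite (HL1 Hga ltac:(lra) Hsnr). f_equal. f_equal. field.
    repeat split; nra.
  - intros [Hr0 Hr1] [Hc0 Hc1].
    assert (Hga : sa * sa < g) by (apply (conv_lt g sa sb sa); auto).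
    rewrite (HL2a ltac:(lra) Hsnr). f_equal. f_equal. field.
    repeat split; nra.
  - intros Hr [Hc0 Hc1].
    assert (Hab : sb * sb < sa * sa).
    { apply Rmult_lt_compat_r with (r := sb * sb) in Hr; [|nra].
      replace (sa * sa / (sb * sb) * (sb * sb)) with (sa * sa) in Hr by (field; lra). lra. }
    replace (1 / (sa / sb)) with (sb / sa) in Hc1 by (field; lra).
    assert (Hgb : g <= sb * sb).
    { apply (conv_le g sb sa sb); auto. replace (sb * sa) with (sa * sb) by ring. exact Hc1. }
    rewrite (HL1 ltac:(lra) Hgb Hsnr). f_equal. f_equal. field.
    repeat split; nra.
  - intros Hr [Hc0 Hc1].
    assert (Hab : sb * sb < sa * sa).
    { apply Rmult_lt_compat_r with (r := sb * sb) in Hr; [|nra].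
      replace (sa * sa / (sb * sb) * (sb * sb)) with (sa * sa) in Hr by (field; lra). lra. }
    replace (1 / (sa / sb)) with (sb / sa) in Hc0 by (field; lra).
    assert (Hgb : sb * sb < g).
    { apply (conv_lt g sb sa sb); auto. replace (sb * sa) with (sa * sb) by ring. exact Hc0. }
    rewrite (HL2b ltac:(lra) Hsnr'). f_equal. f_equal. field.
    repeat split; nra.
Qed.
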